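(* Let $V$ be a set of (three-valued) interpretations over $A$. (1) For each ADF $D$ such that $\mathrm{adm}(D)=V$, there is an adm-characterization $f_D$ for $V$; (2) for each adm-characterization $f:\mathcal{V}_2\to\mathcal{V}_2$ for $V$ we have $\mathrm{adm}(D_f)=V$.
   Context: Let $A$ be a fixed finite set of statements. An interpretation is a mapping $v:A\to\{\mathbf{t},\mathbf{f},\mathbf{u}\}$; $\mathcal{V}$ is the set of all interpretations and $\mathcal{V}_2$ the set of two-valued ones (never assigning $\mathbf{u}$). The information ordering is $\mathbf{u}<_i\mathbf{t}$, $\mathbf{u}<_i\mathbf{f}$, extended pointwise. For $v\in\mathcal{V}$, $[v]_2$ is the set of two-valued interpretations $w$ with $v\leq_i w$. An ADF is $D=(A,L,C)$ where each statement $a$ has an acceptance formula $\varphi_a$ over its parents. The operator $\Gamma_D$ maps $v$ to the interpretation assigning to each $a$ the greatest lower bound w.r.t. $\leq_i$ (consensus: $\mathbf{t}$ if all are $\mathbf{t}$, $\mathbf{f}$ if all are $\mathbf{f}$, otherwise $\mathbf{u}$) of $\{w(\varphi_a)\mid w\in[v]_2\}$. $v$ is admissible for $D$ iff $v\leq_i\Gamma_D(v)$; $\mathrm{adm}(D)$ is the set of admissible interpretations. A function $f:\mathcal{V}_2\to\mathcal{V}_2$ is an adm-characterization of $V$ iff for each $v\in\mathcal{V}$: $v\in V$ iff for every $a\in A$, $v(a)\neq\mathbf{u}$ implies $f(v_2)(a)=v(a)$ for all $v_2\in[v]_2$. For $f:\mathcal{V}_2\to\mathcal{V}_2$, $D_f$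 is the ADF whose acceptance formula for each $a$ is $\varphi^f_a=\bigvee_{w\in\mathcal{V}_2,\,f(w)(a)=\mathbf{t}}\phi_w$ with $\phi_w=\bigwedge_{w(a')=\mathbf{t}}a'\wedge\bigwedge_{w(a')=\mathbf{f}}\neg a'$. *)

(* Defs.v *)
From HB Require Import structures.
From mathcomp Require Import all_boot.
Set Implicit Arguments. Unset Strict Implicit. Unset Printing Implicit Defensive.

Inductive tv := TT | FF | UU.

Definition tv_to_opt (x : tv) : option bool :=
  match x with TT => Some true | FF => Some false | UU => None end.
Definition opt_to_tv (o : option bool) : tv :=
  match o with Some true => TT | Some false => FF | None => UU end.
Lemma tv_to_optK : cancel tv_to_opt opt_to_tv. Proof. by case. Qed.
HB.instance Definition _ := Finite.copy tv (can_type tv_to_optK).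

Section ADFs.
Variable A : finType.

Definition interp := {ffun A -> tv}.
Definition interp2 := {ffun A -> bool}.

Definition tv_of_bool (b : bool) : tv := if b then TT else FF.
Definition emb (w : interp2) : interp := [ffun a => tv_of_bool (w a)].

Definition le_tv (x y : tv) : bool := (x == UU) || (x == y).
Definition le_i (v v' : interp) : bool := [forall a, le_tv (v a) (v' a)].

Definition completions (v : interp) : pred interp2 := fun w => le_i v (emb w).

Inductive formula :=
| FAtom of A | FTop | FBot | FNeg of formula
| FAnd of formula & formula | FOr of formula & formula.

Fixpoint atoms (phi : formula) : seq A :=
  match phi with
  | FAtom a => [:: a]
  | FTop | FBot => [::]
  | FNeg p => atoms p
  | FAnd p q | FOr p q => atoms p ++ atoms q
  end.

Fixpoint eval (w : interp2) (phi : formula) : bool :=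
  match phi with
  | FAtom a => w a
  | FTop => true | FBot => false
  | FNeg p => ~~ eval w p
  | FAnd p q => eval w p && eval w q
  | FOr p q => eval w p || eval w q
  end.

Record ADF := mkADF { links : rel A; acc : A -> formula }.

Definition wf_ADF (D : ADF) : Prop :=
  forall a b, b \in atoms (acc D a) -> links D b a.

(* consensus (glb wrt <=_i) of {w(phi) | w in [v]_2} *)
Definition consensus (v : interp) (phi : formula) : tv :=
  if [forall w, completions v w ==> eval w phi] then TT
  else if [forall w, completions v w ==> ~~ eval w phi] then FF
  else UU.

Definition Gamma (D : ADF) (v : interp) : interp :=
  [ffun a => consensus v (acc D a)].

Definition admissible (D : ADF) (v : interp) : bool := le_i v (Gamma D v).

Definition adm_characterization (V : interp -> Prop) (f : interp2 -> interp2) : Prop :=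
  forall v : interp, V v <->
    (forall a : A, v a != UU ->
       forall v2 : interp2, completions v v2 -> emb (f v2) a = v a).

Definition phi_w (w : interp2) : formula :=
  foldr (fun a acc => FAnd (if w a then FAtom a else FNeg (FAtom a)) acc) FTop (enum A).

Definition phi_f (f : interp2 -> interp2) (a : A) : formula :=
  foldr (fun w acc => FOr (phi_w w) acc) FBot [seq w <- enum {: interp2} | f w a].

Definition D_of (f : interp2 -> interp2) : ADF :=
  mkADF (fun _ _ => true) (phi_f f).

End ADFs.

(* Main.v *)
Require Import Defs.
From mathcomp Require Import all_boot.
From Stdlib Require Import Setoid.

Section S.
Variable A : finType.

Lemma compl_ex (v : interp A) : exists w, completions v w.
Proof.
exists [ffun a => v a == TT]; apply/forallP => a.
rewrite /emb !ffunE /le_tv; by case: (v a).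
Qed.

Lemma adm_iff (D : ADF A) (v : interp A) : admissible D v <->
  forall a, v a != UU -> forall v2, completions v v2 ->
    tv_of_bool (eval v2 (acc D a)) = v a.
Proof.
rewrite /admissible /le_i; split.
- move=> /forallP H a Ha v2 Hv2; have:= H a.
  rewrite /Gamma ffunE /le_tv (negbTE Ha) /= /consensus.
  case: ifP => [/forallP Ht | _].
    move/eqP=> ->; by have:= Ht v2; rewrite Hv2 /= => ->.
  case: ifP => [/forallP Hf | _]; move/eqP=> E.
    rewrite E; by have:= Hf v2; rewrite Hv2 /= => /negbTE ->.
  by rewrite E in Ha.
- move=> H; apply/forallP=> a; rewrite /Gamma ffunE /le_tv /consensus.
  have Ha := H a; case E: (v a) Ha => [||] Ha //=.
  + have ->: [forall w, completions v w ==> eval w (acc D a)].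
      apply/forallP => w; apply/implyP => Hw.
      by have:= Ha isT w Hw; case: eval.
    by [].
  + have Hf: [forall w, completions v w ==> ~~ eval w (acc D a)].
      apply/forallP => w; apply/implyP => Hw.
      by have:= Ha isT w Hw; case: eval.
    have [w0 Hw0] := compl_ex v.
    have ->: [forall w, completions v w ==> eval w (acc D a)] = false.
      apply/negbTE/negP => /forallP /(_ w0); rewrite Hw0 /=.
      by move: Hf => /forallP /(_ w0); rewrite Hw0 /= => /negbTE ->.
    by rewrite Hf.
Qed.

Lemma eval_phi_w (w w' : interp2 A) : eval w (phi_w w') = (w == w').
Proof.
rewrite /phi_w.
have ->: forall s : seq _, eval w (foldr (fun a acc => FAnd (if w' a then FAtom a else FNeg (FAtom a)) acc) (FTop A) s)
   = all (fun a => w a == w' a) s.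
  elim=> [|x s IH] //=; rewrite IH; case: (w' x) => /=; by case: (w x).
apply/allP/eqP => [H|->]; last by [].
apply/ffunP => a; apply/eqP; apply: H; by rewrite mem_enum.
Qed.

Lemma eval_phi_f (f : interp2 A -> interp2 A) w a : eval w (phi_f f a) = f w a.
Proof.
rewrite /phi_f.
have ->: forall s : seq _, eval w (foldr (fun w' acc => FOr (phi_w w') acc) (FBot A) s) = (w \in s).
  elim=> [|x s IH] //=; by rewrite IH eval_phi_w in_cons.
by rewrite mem_filter mem_enum andbT.
Qed.

End S.

Theorem proposition3 (A : finType) (V : interp A -> Prop) :
  (forall D : ADF A, wf_ADF D ->
     (forall v : interp A, admissible D v <-> V v) ->
     exists fD : interp2 A -> interp2 A, adm_characterization V fD)
  /\
  (forall f : interp2 A -> interp2 A, adm_characterization V f ->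
     forall v : interp A, admissible (D_of f) v <-> V v).
Proof.
split.
- move=> D _ HD; exists (fun w => [ffun a => eval w (acc D a)]) => v.
  rewrite -(HD v) adm_iff; split=> H a Ha v2 Hv2; have:= H a Ha v2 Hv2;
    by rewrite /emb !ffunE.
- move=> f Hf v; rewrite (Hf v) adm_iff; split=> H a Ha v2 Hv2; have:= H a Ha v2 Hv2;
    by rewrite /emb ffunE /= eval_phi_f.
Qed.
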